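(* Let $p$ be an odd prime and let $W_p=C_2\wr C_p$. Then $\mathrm{diam}_{\max}(W_p)\le 20(p-1)$.
   Context: The wreath product $W_p=C_2\wr C_p$ is the semidirect product $U\rtimes C_p$, where $U=\mathbb{F}_2^{\,p}$ and a generator of the cyclic group $C_p$ of order $p$ acts on $U$ by cyclically permuting coordinates; thus $|W_p|=p\,2^p$. For a finite group $G$ and a generating set $X$, the Cayley graph $\mathrm{Cay}(G,X)$ has vertex set $G$, with $g$ adjacent to $gx^{\pm1}$ for $x\in X$; $\mathrm{diam}(G,X)$ is its diameter, i.e. the smallest $k$ such that every element of $G$ is a product of at most $k$ elements of $X\cup X^{-1}$. The worst diameter is $\mathrm{diam}_{\max}(G)=\max\{\mathrm{diam}(G,X): X\subseteq G,\ \langle X\rangle=G\}$. *)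

(* Defs.v *)
From HB Require Import structures.
From mathcomp Require Import all_boot all_order all_algebra all_fingroup.

Set Implicit Arguments.
Unset Strict Implicit.
Unset Printing Implicit Defensive.

Import GRing.Theory.

(* Elements are pairs (u, a) with u : 'Z_p -> bool (a vector of F_2^p,       *)
(* coordinates indexed by Z/pZ, addition = xor) and a : 'Z_p (the cyclic     *)
(* group C_p, written additively).  The generator 1 of C_p acts on U by     *)
(* cyclically permuting coordinates: (a . v)(i) = v (i - a).                 *)
(* ('Z_p is Z/pZ for p >= 2; the theorem only uses odd primes p.)           *)

Definition wreath (p : nat) := ({ffun 'Z_p -> bool} * 'Z_p)%type.

HB.instance Definition _ p := Finite.on (wreath p).

Section WreathGroup.
Variable p : nat.
Local Notation W := (wreath p).

Definition wshift (a : 'Z_p) (v : {ffun 'Z_p -> bool}) : {ffun 'Z_p -> bool} :=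
  [ffun i => v (i - a)%R].

Definition wxor (u v : {ffun 'Z_p -> bool}) : {ffun 'Z_p -> bool} :=
  [ffun i => addb (u i) (v i)].

Definition wmul (x y : W) : W :=
  (wxor x.1 (wshift x.2 y.1), (x.2 + y.2)%R).
Definition wone : W := ([ffun => false], 0%R).
Definition winv (x : W) : W := (wshift (- x.2)%R x.1, (- x.2)%R).

Lemma wmulA : associative wmul.
Proof.
move=> [u a] [v b] [w c]; rewrite /wmul /=; congr (_, _); last by rewrite addrA.
apply/ffunP=> i; rewrite !ffunE addbA; congr (addb (addb _ _) _).
by rewrite opprD addrA.
Qed.

Lemma wmul1 : left_id wone wmul.
Proof.
move=> [u a]; rewrite /wmul /=; congr (_, _); last by rewrite add0r.
by apply/ffunP=> i; rewrite !ffunE subr0.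
Qed.

Lemma wmulV : left_inverse wone winv wmul.
Proof.
move=> [u a]; rewrite /wmul /winv /=; congr (_, _); last by rewrite addNr.
by apply/ffunP=> i; rewrite !ffunE opprK addbb.
Qed.

HB.instance Definition _ := Finite_isGroup.Build W wmulA wmul1 wmulV.

End WreathGroup.

Section Diameter.
Variable gT : finGroupType.
Local Open Scope group_scope.

Fixpoint cayley_ball (X : {set gT}) (k : nat) : {set gT} :=
  if k is k'.+1 then cayley_ball X k' :|: (cayley_ball X k' * (X :|: X^-1))
  else [set 1].

(* diam(G, X): the least k such that every element of G = gT is a product of
   at most k elements of X ∪ X^-1.  For generating X this k is < #|gT|.+1,
   so searching in [0, #|gT|] is exhaustive. *)
Definition cayley_diam (X : {set gT}) : nat :=
  find (fun k => cayley_ball X k == [set: gT]) (iota 0 #|gT|.+1).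

Definition diam_max : nat :=
  \max_(X : {set gT} | <<X>> == [set: gT]) cayley_diam X.

End Diameter.

(* Main.v *)
Require Import Defs.
From mathcomp Require Import all_boot all_order all_algebra all_fingroup.
From mathcomp Require Import commutator zify.
Set Implicit Arguments. Unset Strict Implicit. Unset Printing Implicit Defensive.
Import GRing.Theory.

Local Open Scope group_scope.

Lemma Zp_gen p (pp : prime p) (a : 'Z_p) : a != 0%R -> forall b : 'Z_p, exists j, b = (a *+ j)%R.
Proof.
move=> a0 b.
have p1 : 1 < p by apply: prime_gt1.
have cardZ : #|[set: 'Z_p]| = p by rewrite cardsT card_ord Zp_cast.
have hd : (#[a]%g %| #|[set: 'Z_p]|)%N by apply: cardSg; apply: subsetT.
rewrite cardZ in hd.
have : #[a]%g = p.
  case/primeP: pp => _ /(_ _ hd) /orP[/eqP h1|/eqP //].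
  by move: h1 => /eqP; rewrite order_eq1 => /eqP h; case/eqP: a0.
move=> hop.
have : b \in <[a]>%g.
  have -> : <[a]>%g = [set: 'Z_p].
    apply/eqP; rewrite eqEcard subsetT {1}cardZ; by rewrite -{1}hop /order leqnn.
  by rewrite inE.
case/cycleP=> i ->; exists i; by rewrite Zp_expg Zp_mulrn.
Qed.

Local Close Scope group_scope.

Local Open Scope group_scope.
Local Open Scope group_scope.

Section WB.
Variable p : nat.
Local Notation W := (wreath p).

Lemma w2M (g h : W) : (g * h).2 = (g.2 + h.2)%R. Proof. by []. Qed.
Lemma w2V (g : W) : (g^-1).2 = (- g.2)%R. Proof. by []. Qed.
Lemma w21 : (1 : W).2 = 0%R. Proof. by []. Qed.
Lemma w2X (g : W) n : (g ^+ n).2 = (g.2 *+ n)%R.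
Proof. elim: n => [|n IH]; first by []. by rewrite expgS w2M IH mulrS. Qed.

Definition Uset : {set W} := [set g : W | g.2 == 0%R].
Lemma Uset_group : group_set Uset.
Proof.
apply/group_setP; split; first by rewrite inE.
by move=> g h; rewrite !inE w2M => /eqP-> /eqP->; rewrite addr0.
Qed.
Canonical Ug := Group Uset_group.

Lemma wshift0 (v : {ffun 'Z_p -> bool}) : wshift 0%R v = v.
Proof. by apply/ffunP=> i; rewrite ffunE subr0. Qed.

Lemma Ug_abelian : abelian Uset.
Proof.
apply/centsP=> g hg h hh; move: hg hh; rewrite !inE => /eqP hg /eqP hh.
apply: injective_projections => /=.
  by apply/ffunP=> i; rewrite /mulg /= !ffunE hg hh !subr0 addbC.
by rewrite hg hh.
Qed.

Lemma Ug_sq g : g \in Uset -> g * g = 1.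
Proof.
rewrite inE => /eqP hg; apply: injective_projections => /=.
  by apply/ffunP=> i; rewrite /mulg /= !ffunE hg subr0 addbb.
by rewrite hg addr0.
Qed.

Lemma Ug_conj g y : g \in Uset -> g ^ y \in Uset.
Proof. by rewrite !inE conjgE !w2M w2V => /eqP->; rewrite add0r addNr. Qed.

Lemma Ug_comm x y : [~ x, y] \in Uset.
Proof.
rewrite inE commgEl conjgE !w2M !w2V (addrC x.2) addKr addNr //.
Qed.

Lemma Ug_card (p1 : 1 < p) : (#|Uset| <= 2 ^ p)%N.
Proof.
have -> : (2 ^ p)%N = #|{ffun 'Z_p -> bool}|.
  by rewrite card_ffun card_bool card_ord Zp_cast.
have sub : Uset \subset [set (f, 0%R) | f : {ffun 'Z_p -> bool}].
  apply/subsetP=> g; rewrite inE => /eqP hg; apply/imsetP; exists g.1 => //.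
  by rewrite -hg; case: g {hg}.
apply: leq_trans (subset_leq_card sub) _.
exact: leq_trans (leq_imset_card _ _) _.
Qed.

End WB.

Local Close Scope group_scope.

Local Open Scope group_scope.
Local Open Scope group_scope.

Lemma Ug_const p (pp : prime p) (x z : wreath p) : x.2 != 0%R -> z \in Uset p ->
  commute x z -> forall i, z.1 i = z.1 0%R.
Proof.
move=> x0; rewrite inE => /eqP hz hc.
have h1 : forall i, z.1 (i - x.2)%R = z.1 i.
  move=> i; have := congr1 (fun g : wreath p => g.1 i) hc.
  rewrite /mulg /= !ffunE hz subr0.
  by case: (x.1 i); case: (z.1 i); case: (z.1 _).
have hj : forall j i, z.1 (i - x.2 *+ j)%R = z.1 i.
  elim=> [|j IH] i; first by rewrite subr0.
  by rewrite mulrS opprD addrA IH h1.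
move=> i; have [j hj'] := Zp_gen pp x0 i.
by rewrite -(hj j i) -hj' subrr.
Qed.

Local Close Scope group_scope.

Local Open Scope group_scope.
Local Open Scope group_scope.

Section Ball.
Variable gT : finGroupType.
Variable X : {set gT}.
Local Notation ball := (cayley_ball X).
Local Notation S := (X :|: X^-1).

Lemma ball_mono1 n : ball n \subset ball n.+1.
Proof. by rewrite /= subsetUl. Qed.

Lemma ball_mono m n : m <= n -> ball m \subset ball n.
Proof.
move=> /subnK <-; elim: (n - m) => [|k IH]; first by rewrite add0n.
by rewrite addSn (subset_trans IH (ball_mono1 _)).
Qed.

Lemma ball1_in n : 1 \in ball n.
Proof. by apply: (subsetP (ball_mono (leq0n n))); rewrite /= set11. Qed.

Lemma ballS_in n a s : a \in ball n -> s \in S -> a * s \in ball n.+1.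
Proof. by move=> ha hs; rewrite /= inE; apply/orP; right; apply/mulsgP; exists a s. Qed.

Lemma ballX_in x : x \in X -> x \in ball 1.
Proof. by move=> hx; rewrite -[x]mul1g; apply: ballS_in; rewrite ?set11 // inE hx. Qed.

Lemma ballXV_in x : x \in X -> x^-1 \in ball 1.
Proof.
by move=> hx; rewrite -[x^-1]mul1g; apply: ballS_in; rewrite ?set11 // inE inE invgK hx orbT.
Qed.

Lemma ball_mul m n a b : a \in ball m -> b \in ball n -> a * b \in ball (m + n).
Proof.
move=> ha; elim: n b => [|n IH] b /=.
  by rewrite inE => /eqP->; rewrite mulg1 addn0.
rewrite inE => /orP[hb|/mulsgP[b' s hb' hs ->]].
  by rewrite addnS; apply: (subsetP (ball_mono1 _)); apply: IH.
by rewrite addnS mulgA; apply: ballS_in => //; apply: IH.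
Qed.

Lemma ball_closed (A : {set gT}) :
  1 \in A -> (forall a s, a \in A -> s \in S -> a * s \in A) ->
  forall n, ball n \subset A.
Proof.
move=> h1 hA; elim=> [|n IH] /=; first by rewrite sub1set.
rewrite subUset IH /=; apply/subsetP=> g /mulsgP[a s ha hs ->].
by apply: hA => //; apply: (subsetP IH).
Qed.

Lemma prod_ball n (c : 'I_n -> gT) : (forall i, c i \in X) -> \prod_i c i \in ball n.
Proof.
elim: n c => [|n IH] c hc; first by rewrite big_ord0 ball1_in.
rewrite big_ord_recr.
have := ball_mul (IH (fun i => c (widen_ord (leqnSn n) i)) (fun i => hc _)) (ballX_in (hc ord_max)).
by rewrite addn1.
Qed.

Lemma gen_ball g : g \in <<X>> -> exists n, g \in ball n.
Proof. by move=> /gen_prodgP[n [c hc ->]]; exists n; apply: prod_ball. Qed.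

Lemma gen_sub_closed (A : {set gT}) :
  1 \in A -> (forall a s, a \in A -> s \in S -> a * s \in A) -> <<X>> \subset A.
Proof.
move=> h1 hA; apply/subsetP=> g /gen_ball[n hn].
exact: (subsetP (ball_closed h1 hA n)).
Qed.

Lemma growth (N : {group gT}) : X \subset 'N(N) -> <<X>> = setT ->
  forall k, #|gT| <= k.+1 * #|N| -> ball k * N = setT.
Proof.
move=> nN gX.
have SN : forall s, s \in S -> s \in 'N(N).
  move=> s; rewrite in_setU => /orP[hs|]; first exact: (subsetP nN).
  rewrite inE => hs.
  by rewrite -groupV; apply: (subsetP nN).
have key : forall k, ball k * N = setT \/ k.+1 * #|N| <= #|ball k * N|.
  elim=> [|k IH].
    by right; rewrite /= mul1n mul1g.
  have sub : ball k * N \subset ball k.+1 * N by apply: mulSg; apply: ball_mono1.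
  case: IH => [E|IH].
    by left; apply/eqP; rewrite eqEsubset subsetT /= -E sub.
  case: (eqVneq (ball k.+1 * N) setT) => [E|NE]; [by left| right].
  have [d hd1 hd2] : exists2 d, d \in ball k.+1 * N & d \notin ball k * N.
    apply/exists_inP; rewrite -negb_forall_in; apply/negP=> /forall_inP hall.
    have hsub : ball k.+1 * N \subset ball k * N by apply/subsetP=> g /hall.
    have : <<X>> \subset ball k * N.
      apply: gen_sub_closed.
        by apply/mulsgP; exists 1 1; rewrite ?mulg1 ?ball1_in ?group1.
      move=> a s /mulsgP[b n hb hn ->] hs.
      apply: (subsetP hsub); apply/mulsgP; exists (b * s) (n ^ s).
      - exact: ballS_in.
      - by rewrite memJ_norm // SN.
      by rewrite conjgE !mulgA mulgK.
    rewrite gX => hT; case/negP: NE; rewrite eqEsubset subsetT /=.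
    exact: subset_trans hT sub.
  have dis : [disjoint ball k * N & d *: N].
    rewrite -setI_eq0; apply/eqP/setP=> g; rewrite !inE.
    apply/negP=> /andP[/mulsgP[b n hb hn ->] /lcosetP[m hm E]].
    case/negP: hd2; apply/mulsgP; exists b (n * m^-1); rewrite ?groupM ?groupV //.
    by rewrite mulgA E mulgK.
  have hdN : d *: N \subset ball k.+1 * N.
    apply/subsetP=> g /lcosetP[m hm ->].
    case/mulsgP: hd1 => b n hb hn ->; apply/mulsgP; exists b (n * m); rewrite ?groupM //.
    by rewrite mulgA.
  have := subset_leq_card (introT subUsetP (conj sub hdN)).
  rewrite cardsU (disjoint_setI0 dis) cards0 subn0 card_lcoset.
  by rewrite mulSn addnC; apply: leq_trans; rewrite leq_add2l.
move=> k hk; case: (key k) => // hc.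
apply/eqP; rewrite eqEcard subsetT cardsT; exact: leq_trans hk hc.
Qed.
End Ball.

Local Close Scope group_scope.

Local Open Scope group_scope.
Local Open Scope group_scope.

Section Main.
Variable p : nat.
Hypothesis pp : prime p.
Local Notation W := (wreath p).
Variable X : {set W}.
Hypothesis hX : <<X>> = setT.
Variable x : W.
Hypothesis xX : x \in X.
Hypothesis x0 : x.2 != 0%R.
Local Notation ball := (cayley_ball X).

Let p1 : 1 < p. Proof. exact: prime_gt1. Qed.
Let p0 : 0 < p. Proof. exact: prime_gt0. Qed.

Definition cc (y : W) := [~ x, y].
Definition Gs : {set W} :=
  [set g | [exists y in X, exists j : 'I_p, g == cc y ^ (x ^+ j)]].
Definition Gstar := <<Gs>>.

Lemma Gs_Ug : Gs \subset Uset p.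
Proof.
apply/subsetP=> g; rewrite inE => /exists_inP[y _ /existsP[j /eqP->]].
by apply: Ug_conj; apply: Ug_comm.
Qed.

Lemma Gstar_Ug : Gstar \subset Uset p.
Proof. by rewrite /Gstar gen_subG Gs_Ug. Qed.

Lemma cc_Gs y : y \in X -> cc y \in Gs.
Proof.
move=> hy; rewrite inE; apply/exists_inP; exists y => //; apply/existsP.
by exists (Ordinal p0); rewrite /= expg0 conjg1.
Qed.

Lemma cc_ball y : y \in X -> cc y \in ball 4.
Proof.
move=> hy; rewrite /cc commgEl conjgE.
have -> : 4 = 1 + (1 + (1 + 1)) by [].
apply: ball_mul; first exact: ballXV_in.
apply: ball_mul; first exact: ballXV_in.
by apply: ball_mul; apply: ballX_in.
Qed.

Lemma xp_Ug : x ^+ p \in Uset p.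
Proof.
rewrite inE w2X -mulr_natr.
have -> : (p%:R : 'Z_p)%R = 0%R by apply: val_inj; rewrite /= val_Zp_nat // modnn.
by rewrite mulr0.
Qed.

Lemma Ug_comm_el a b : a \in Uset p -> b \in Uset p -> commute a b.
Proof. by move=> ha hb; apply: (centsP (Ug_abelian p)). Qed.

Lemma x_norm : x \in 'N(Gstar).
Proof.
rewrite inE /Gstar -genJ gen_subG; apply/subsetP=> g.
rewrite mem_conjg inE => /exists_inP[y hy /existsP[j /eqP hg]].
have -> : g = cc y ^ (x ^+ j.+1) by rewrite expgSr conjgM -hg conjgKV.
case: (ltnP j.+1 p) => hj.
  apply: mem_gen; rewrite inE; apply/exists_inP; exists y => //; apply/existsP.
  by exists (Ordinal hj).
have -> : j.+1 = p by apply/eqP; rewrite eqn_leq hj ltn_ord.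
rewrite conjgE (Ug_comm_el (Ug_comm x y) xp_Ug) mulKg.
by apply: mem_gen; apply: (cc_Gs hy).
Qed.

Lemma X_norm : X \subset 'N(Gstar).
Proof.
apply/subsetP=> y hy.
have [j hj] := Zp_gen pp x0 y.2.
have hv : y * (x ^+ j)^-1 \in Uset p by rewrite inE w2M w2V w2X hj subrr.
rewrite -(mulgKV (x ^+ j) y); apply: groupM; last by apply: groupX; apply: x_norm.
apply: (subsetP (cent_sub _)); apply/centP=> g hg.
by apply: Ug_comm_el => //; apply: (subsetP Gstar_Ug).
Qed.

Lemma norm_all g : g \in 'N(Gstar).
Proof.
have : <<X>> \subset 'N(Gstar) by rewrite gen_subG X_norm.
by rewrite hX => /subsetP; apply; rewrite inE.
Qed.

Lemma comm_all g : [~ x, g] \in Gstar.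
Proof.
have gK : group_set [set g | [~ x, g] \in Gstar].
  apply/group_setP; split; first by rewrite inE commg1 group1.
  move=> a b; rewrite !inE => ha hb.
  by rewrite commgMJ groupM // memJ_norm // norm_all.
have : <<X>> \subset Group gK.
  rewrite gen_subG; apply/subsetP=> y hy; rewrite inE.
  by apply: mem_gen; apply: cc_Gs.
by rewrite hX => /subsetP /(_ g); rewrite !inE; apply.
Qed.


Lemma index_bound : (#|[set: W]| <= (2 * p) * #|Gstar|)%N.
Proof.
pose psi (g : W) : W * bool * 'Z_p := ([~ x, ((g.1, 0%R) : W)], g.1 0%R, g.2).
have inj : injective psi.
  move=> g g' E.
  pose h : W := (g.1, 0%R); pose h' : W := (g'.1, 0%R).
  have e1 : [~ x, h] = [~ x, h'] by exact: (congr1 (fun z => z.1.1) E).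
  have e2 : g.1 0%R = g'.1 0%R by exact: (congr1 (fun z => z.1.2) E).
  have e3 : g.2 = g'.2 by exact: (congr1 (fun z => z.2) E).
  have ex : x ^ h = x ^ h'.
    by rewrite -(mulKVg x (x ^ h)) -commgEl e1 commgEl mulKVg.
  have hz : x ^ (h' * h^-1) = x by rewrite conjgM -ex conjgK.
  have hc : commute x (h' * h^-1) by apply/commgP/conjg_fixP.
  have hU : h' * h^-1 \in Uset p by rewrite inE w2M w2V /= oppr0 addr0.
  have hk := Ug_const pp x0 hU hc.
  have e1' : g.1 = g'.1.
    apply/ffunP=> i; have := hk i; rewrite /h /h' /mulg /= !ffunE; rewrite ?oppr0 ?addr0 e2.
    by rewrite addbb; case: (g.1 i); case: (g'.1 i).
  by case: g g' e1' e3 {E e1 e2 ex hz hc hU hk h h'} => [a b] [a' b'] /= -> ->.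
have sub : psi @: [set: W] \subset setX (setX Gstar [set: bool]) [set: 'Z_p].
  by apply/subsetP=> z /imsetP[g _ ->]; rewrite !inE /= comm_all.
have := subset_leq_card sub.
rewrite card_imset // !cardsX !cardsT card_bool card_ord Zp_cast // => h.
apply: leq_trans h _; by rewrite [X in _ <= X]mulnC mulnA.
Qed.


Definition Inv k (H : {set W}) :=
  exists n, H \subset ball n /\ (2 ^ n <= 4 ^ k * #|H| ^ 4)%N.

Lemma add_step k (H : {group W}) c0 : H \subset Gstar -> Inv k H ->
  c0 \in Gstar -> c0 \in ball 4 ->
  exists H' : {group W}, [/\ H \subset H', c0 \in H', H' \subset Gstar & Inv k H'].
Proof.
move=> HG [n [Hn Hc]] cG cb.
case: (boolP (c0 \in H)) => cH; first by exists H; split => //; exists n.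
have cU : c0 \in Uset p by apply: (subsetP Gstar_Ug).
have HU : H \subset Uset p by apply: subset_trans HG Gstar_Ug.
exists (H <*> <[c0]>)%G; split.
- exact: joing_subl.
- by apply: (subsetP (joing_subr _ _)); apply: cycle_id.
- by rewrite join_subG HG cycle_subG.
exists (n + 4); split.
  have com : commute H <[c0]>.
    apply: centC; apply: subset_trans HU _.
    apply: subset_trans (Ug_abelian p) _; apply: centS; by rewrite cycle_subG.
  rewrite /= comm_joingE //; apply/subsetP=> g /mulsgP[h z hh /cycleP[i ->] ->].
  have c2 : c0 ^+ 2 = 1 by rewrite expgS expg1 Ug_sq.
  rewrite -(expg_mod i c2).
  have : i %% 2 < 2 by rewrite ltn_mod.
  case: (i %% 2) => [|[|//]] _.
    rewrite expg0 mulg1; apply: (subsetP (ball_mono _ (leq_addr 4 n))).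
    exact: (subsetP Hn).
  by rewrite expg1; apply: ball_mul => //; apply: (subsetP Hn).
have lt : #|H| < #|H <*> <[c0]>|.
  apply: proper_card; apply/properP; split; first exact: joing_subl.
  exists c0 => //; by apply: (subsetP (joing_subr _ _)); apply: cycle_id.
have dv : #|H| %| #|H <*> <[c0]>| by apply: cardSg; apply: joing_subl.
have h2 : 2 * #|H| <= #|H <*> <[c0]>|.
  case/dvdnP: dv => q hq; rewrite hq in lt *.
  rewrite leq_mul2r; apply/orP; right.
  have hp := cardG_gt0 H.
  case: q {hq} lt => [|[|q]] //; by rewrite ?mul0n ?mul1n ?ltnn.
rewrite expnD; apply: (@leq_trans (4 ^ k * #|H| ^ 4 * 2 ^ 4)); first by rewrite leq_mul2r Hc orbT.
rewrite -mulnA leq_mul2l; apply/orP; right.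
rewrite -expnMn mulnC; by rewrite leq_exp2r.
Qed.

Lemma inner k (s : seq W) : {subset s <= X} -> forall H0 : {group W},
  H0 \subset Gstar -> Inv k H0 ->
  exists H : {group W}, [/\ H0 \subset H, H \subset Gstar, Inv k H &
                           forall y, y \in s -> cc y \in H].
Proof.
elim: s => [|y s IH] sX H0 HG HI; first by exists H0; split.
have yX : y \in X by apply: sX; rewrite inE eqxx.
have [H1 [s01 c1 HG1 HI1]] := add_step HG HI (mem_gen (cc_Gs yX)) (cc_ball yX).
have sX' : {subset s <= X} by move=> z hz; apply: sX; rewrite inE hz orbT.
have [H [s1 HG2 HI2 hall]] := IH sX' H1 HG1 HI1.
exists H; split => //; first exact: subset_trans s01 s1.
move=> z; rewrite inE => /orP[/eqP->|hz]; last exact: hall.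
exact: (subsetP s1).
Qed.

Lemma level k : k < p -> exists H : {group W}, [/\ H \subset Gstar, Inv k H &
   forall y j, y \in X -> j <= k -> cc y ^ (x ^+ j) \in H].
Proof.
have sX : {subset enum X <= X} by move=> z; rewrite mem_enum.
elim: k => [|k IH] hk.
  have HI : Inv 0 (1%G : {group W}).
    by exists 0; split; rewrite ?cards1 //= sub1set inE.
  have [H [_ HG HI2 hall]] := inner sX (sub1G _) HI.
  exists H; split => // y j hy; rewrite leqn0 => /eqP->.
  by rewrite expg0 conjg1; apply: hall; rewrite mem_enum.
have [H [HG [n [Hn Hc]] hall]] := IH (ltnW hk).
have HI : Inv k.+1 (H :^ x)%G.
  exists (n + 2); split.
    apply/subsetP=> g; rewrite mem_conjg => hg.
    rewrite -(conjgKV x g) conjgE.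
    have -> : n + 2 = 1 + (n + 1) by rewrite add1n addn1 addn2.
    apply: ball_mul; first exact: ballXV_in.
    by apply: ball_mul; [apply: (subsetP Hn) | apply: ballX_in].
  have -> : (2 ^ (n + 2) = 4 * 2 ^ n)%N by rewrite expnD mulnC.
  by rewrite /= cardJg expnS -mulnA leq_mul2l Hc orbT.
have HG1 : (H :^ x)%G \subset Gstar.
  by rewrite /= -(normP x_norm) conjSg.
have [H' [s1 HG2 HI2 hall2]] := inner sX HG1 HI.
exists H'; split => // y j hy; case: j => [|j] hj.
  by rewrite expg0 conjg1; apply: hall2; rewrite mem_enum.
apply: (subsetP s1); rewrite /= expgSr conjgM memJ_conjg.
exact: hall.
Qed.

Lemma horner : exists n, Gstar \subset ball n /\ (n <= 6 * p - 2)%N.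
Proof.
have [H [HG [n [Hn Hc]] hall]] := @level p.-1 (ltac:(by rewrite ltn_predL)).
have E : Gstar = H.
  apply/eqP; rewrite eqEsubset HG andbT /Gstar gen_subG; apply/subsetP=> g.
  rewrite inE => /exists_inP[y hy /existsP[j /eqP->]].
  by apply: hall => //; rewrite -ltnS prednK.
exists n; split; first by rewrite E.
have hH : (#|H| <= 2 ^ p)%N by rewrite -E; apply: leq_trans (subset_leq_card Gstar_Ug) (Ug_card p1).
have : (2 ^ n <= 2 ^ (6 * p - 2))%N.
  apply: leq_trans Hc _.
  have -> : (6 * p - 2 = 2 * p.-1 + p * 4)%N.
    by case: p p1 => [|[|q]] //= _; rewrite !mulSn !mul0n; lia.
  rewrite expnD expnM expnM; apply: leq_mul => //.
  by rewrite leq_exp2r.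
by rewrite leq_exp2l.
Qed.

End Main.

Local Close Scope group_scope.

Local Open Scope group_scope.
Local Open Scope group_scope.

Lemma diam_le (gT : finGroupType) (X : {set gT}) K :
  cayley_ball X K = setT -> cayley_diam X <= K.
Proof.
move=> hK; rewrite /cayley_diam.
case: (ltnP K #|gT|.+1) => hl.
  rewrite leqNgt; apply/negP=> hf.
  have := before_find 0 hf; rewrite nth_iota // add0n hK eqxx //.
apply: leq_trans hl; have := find_size (fun k => cayley_ball X k == [set: gT]) (iota 0 #|gT|.+1); by rewrite size_iota.
Qed.

Local Close Scope group_scope.
Unset Implicit Arguments.
Theorem theorem1 (p : nat) (p_prime : prime p) (p_odd : odd p) :
  diam_max (wreath p) <= 20 * (p - 1).
Proof.
Local Open Scope group_scope.
rewrite /diam_max; apply/bigmax_leqP => X /eqP hX.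
have p1 : 1 < p by apply: prime_gt1.
have p3 : 2 < p.
  case: p p_odd p1 {p_prime hX X} => [|[|[|q]]] //.
have [x xX x0] : exists2 x : wreath p, x \in X & x.2 != 0%R.
  apply/exists_inP; rewrite -negb_forall_in; apply/negP=> /forall_inP hall.
  have : <<X>> \subset Uset p.
    by rewrite gen_subG; apply/subsetP=> y hy; rewrite inE; have := hall y hy.
  rewrite hX => /subsetP /(_ ([ffun => false], 1%R)); rewrite !inE /= => /(_ isT).
  by rewrite oner_eq0.
have [n [Gn hn]] := horner p_prime xX x0.
have hg := growth (N := <<Gs X x>>%G) (X_norm p_prime X x0) hX (k := (2 * p).-1).
have := index_bound p_prime hX x0; rewrite cardsT => hi.
have E : cayley_ball X (2 * p).-1 * <<Gs X x>> = setT.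
  by apply: hg; rewrite prednK ?muln_gt0 ?p1 ?(ltnW p1).
apply: (@leq_trans (8 * p - 3)); last by lia.
apply: diam_le; apply/eqP; rewrite eqEsubset subsetT /=.
apply/subsetP=> g _.
have : g \in cayley_ball X (2 * p).-1 * <<Gs X x>> by rewrite E inE.
case/mulsgP=> b m hb hm ->.
have hle : (2 * p).-1 + n <= 8 * p - 3 by rewrite -subn1; lia.
apply: (subsetP (ball_mono _ hle)).
apply: ball_mul => //; exact: (subsetP Gn).
Qed.

Local Close Scope group_scope.
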